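(* Let $\mathbf{A}$ be an $n\times k$ matrix with i.i.d. $\mathrm{Bernoulli}(p)$ entries. Let $\mathcal{S}$ be a set of size $m>k$ drawn uniformly at random from $[n]$, let $\mathbf{A}_{\mathcal{S}}$ be the $m\times k$ submatrix formed by the rows of $\mathbf{A}$ indexed by $\mathcal{S}$, and let $\alpha=\max(p,1-p)$. Then $$\mathbb{P}\left[\mathrm{rank}_{\mathbb{R}}(\mathbf{A}_{\mathcal{S}})=k\right]\ge 1-\min\left(1,k\cdot\alpha^{m-k+1}\right).$$ *)

(* Defs.v *)
From HB Require Import structures.
From mathcomp Require Import all_boot all_order all_algebra.
From mathcomp Require Import reals.
Set Implicit Arguments. Unset Strict Implicit. Unset Printing Implicit Defensive.
Import Order.TTheory GRing.Theory Num.Theory.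
Local Open Scope ring_scope.

Definition bern_weight (R : realType) (p : R) (n k : nat) (A : 'M[bool]_(n, k)) : R :=
  \prod_(i < n) \prod_(j < k) (if A i j then p else 1 - p).

Definition row_submx (R : realType) (n k : nat) (A : 'M[bool]_(n, k))
  (S : {set 'I_n}) : 'M[R]_(#|S|, k) :=
  \matrix_(i < #|S|, j < k) ((A (@enum_val _ (mem S) i) j)%:R : R).

(* P[ rank_R(A_S) = k ] where A ~ i.i.d. Bernoulli(p) (n x k) and S is drawn
   uniformly among the m-subsets of [n], independently of A. *)
Definition prob_full_col_rank (R : realType) (p : R) (n k m : nat) : R :=
  \sum_(A : 'M[bool]_(n, k))
    \sum_(S : {set 'I_n} | #|S| == m)
      bern_weight p A * ('C(n, m)%:R)^-1 * ((\rank (row_submx R A S) == k)%:R).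

(* Main.v *)
From HB Require Import structures.
From mathcomp Require Import all_boot all_order all_algebra.
From mathcomp Require Import reals zify.
Require Import Defs.
Set Implicit Arguments. Unset Strict Implicit. Unset Printing Implicit Defensive.
Import Order.TTheory GRing.Theory Num.Theory.
Local Open Scope ring_scope.

Lemma pivot_set (F : fieldType) k s (V : 'M[F]_(k,s)) :
  exists D : {set 'I_s}, (#|D| <= \rank V)%N /\
   forall v : 'rV_s, (v <= V)%MS -> (forall t, t \in D -> v 0 t = 0) -> v = 0.
Proof.
pose B := V^T.
pose f := maxrankfun B.
exists [set f i | i in 'I_(\rank B)]; split.
  by rewrite -(mxrank_tr V) (leq_trans (leq_imset_card _ _)) // card_ord.
move=> v /submxP [x ->] H.
have eqB := eq_maxrowsub B.
have /submxP [C hC] : (B <= rowsub f B)%MS by rewrite eqB.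
have h0 : rowsub f B *m x^T = 0.
  rewrite mul_rowsub_mx -trmx_mul.
  apply/matrixP => i j; rewrite !mxE (ord1 j).
  by rewrite -[RHS](H (f i)) ?imset_f // [RHS]mxE.
have h1 : (x *m V)^T = 0 by rewrite trmx_mul -/B hC -mulmxA h0 mulmx0.
by have := congr1 trmx h1; rewrite trmxK trmx0.
Qed.

Definition PU (F : fieldType) k s (j : nat) (N : 'M[F]_(k,s)) : 'M[F]_(k,s) :=
  (pid_mx j : 'M_k) *m N.

Lemma pidmxE (F : fieldType) k s j (N : 'M[F]_(k,s)) i l :
  PU j N i l = if (i < j)%N then N i l else 0.
Proof.
rewrite /PU !mxE (bigD1 i) //= big1 ?addr0.
  by rewrite !mxE eqxx /=; case: (i < j)%N; rewrite ?mul1r ?mul0r.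
move=> t ht; rewrite !mxE; case: eqP => [/val_inj hit|] /=.
  by rewrite hit eqxx in ht.
by rewrite mul0r.
Qed.

Lemma rank_seq (F : fieldType) k s (N : 'M[F]_(k,s)) :
  (forall j : 'I_k, ~~ (row j N <= PU j N)%MS) -> \rank N = k.
Proof.
move=> H.
suff: forall j, (j <= k)%N -> (j <= \rank (PU j N))%N.
  move=> /(_ k (leqnn k)); rewrite /PU pid_mx_1 mul1mx => h.
  by apply/eqP; rewrite eqn_leq rank_leq_row h.
elim=> [|j IH] hj //.
have ltj : (j < k)%N by [].
have hsub : (PU j N <= PU j.+1 N)%MS.
  have -> : PU j N = PU j (PU j.+1 N).
    apply/matrixP => i l; rewrite !pidmxE.
    by case: ifP => // hi; rewrite (ltn_trans hi).
  exact: submxMl.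
have hrow : (row (Ordinal ltj) N <= PU j.+1 N)%MS.
  have -> : row (Ordinal ltj) N = row (Ordinal ltj) (PU j.+1 N).
    by apply/rowP => l; rewrite [LHS]mxE [RHS]mxE pidmxE /= ltnSn.
  exact: row_sub.
have := mxrank_leqif_sup hsub => -[hle heq].
have hne : \rank (PU j N) != \rank (PU j.+1 N).
  rewrite heq; apply: contra (H (Ordinal ltj)) => hs.
  by apply: submx_trans hrow hs.
have := IH (ltnW hj); move=> h1.
by rewrite (leq_ltn_trans h1) // ltn_neqAle hne hle.
Qed.

Section Gen.
Variables (R : realType) (p : R).
Hypothesis hp : 0 <= p <= 1.

Definition q (b : bool) : R := if b then p else 1 - p.
Definition alpha : R := Num.max p (1 - p).
Definition mu (X : finType) (f : {ffun X -> bool}) : R := \prod_x q (f x).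

Lemma q_ge0 b : 0 <= q b.
Proof. by case/andP: hp => h0 h1; case: b; rewrite /q // subr_ge0. Qed.

Lemma q_le_alpha b : q b <= alpha.
Proof. by case: b; rewrite /q /alpha le_max lexx ?orbT. Qed.

Lemma alpha_ge0 : 0 <= alpha.
Proof. exact: le_trans (q_ge0 true) (q_le_alpha true). Qed.

Lemma alpha_le1 : alpha <= 1.
Proof.
case/andP: hp => h0 h1; rewrite /alpha ge_max h1 /=.
by rewrite lerBlDr lerDl.
Qed.

Lemma mu_ge0 (X : finType) (f : {ffun X -> bool}) : 0 <= mu f.
Proof. by apply: prodr_ge0 => x _; exact: q_ge0. Qed.

Lemma sum_q : \sum_b q b = 1.
Proof. by rewrite big_bool /q /= addrC subrK. Qed.

Lemma sum_mu (X : finType) : \sum_(f : {ffun X -> bool}) mu f = 1.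
Proof.
rewrite /mu -(bigA_distr_bigA (fun x b => q b)).
by apply: big1 => x _; exact: sum_q.
Qed.

Lemma mu_inj_bound (X : finType) (E : pred {ffun X -> bool}) (T : {set X}) :
  (forall f g, E f -> E g -> (forall x, x \notin T -> f x = g x) -> f = g) ->
  \sum_(f | E f) mu f <= alpha ^+ #|T|.
Proof.
move=> Hinj.
pose G (f : {ffun X -> bool}) := \prod_(x | x \notin T) q (f x).
have step1 : forall f, mu f <= alpha ^+ #|T| * G f.
  move=> f; rewrite /mu (bigID (fun x => x \in T)) /=.
  apply: ler_wpM2r; first by apply: prodr_ge0 => x _; exact: q_ge0.
  rewrite -prodr_const; apply: ler_prod => x _.
  by rewrite q_ge0 q_le_alpha.
apply: le_trans (ler_sum _ (fun f _ => step1 f)) _.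
rewrite -mulr_sumr -[X in _ <= X]mulr1; apply: ler_wpM2l.
  by apply: exprn_ge0; exact: alpha_ge0.
pose phi (f : {ffun X -> bool}) : {ffun X -> bool} :=
  [ffun x => if x \in T then false else f x].
pose H (g : {ffun X -> bool}) : R :=
  \prod_x (if x \in T then (~~ g x)%:R else q (g x)).
have GH : forall f, G f = H (phi f).
  move=> f; rewrite /G /H big_mkcond /=; apply: eq_bigr => x _.
  by rewrite ffunE; case: (x \in T).
have H0 : forall g, 0 <= H g.
  move=> g; apply: prodr_ge0 => x _; case: (x \in T); rewrite ?q_ge0 //.
under eq_bigr do rewrite GH.
have -> : \sum_(f | E f) H (phi f) = \sum_(f in [set f | E f]) H (phi f).
  by apply: eq_bigl => f; rewrite inE.
rewrite -big_imset; last first.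
  move=> f g; rewrite !inE => Ef Eg hfg; apply: Hinj => // x hx.
  have := congr1 (fun h : {ffun X -> bool} => h x) hfg.
  by rewrite /= !ffunE (negPf hx).
apply: le_trans (_ : \sum_g H g <= 1).
  rewrite [X in _ <= X](bigID (fun g => g \in phi @: [set f | E f])) /=.
  by rewrite lerDl; apply: sumr_ge0 => g _; exact: H0.
rewrite /H -(bigA_distr_bigA (fun x b => if x \in T then (~~ b)%:R else q b)).
rewrite le_eqVlt; apply/orP; left; apply/eqP.
apply: big1 => x _; case: (x \in T); last exact: sum_q.
by rewrite big_bool /= add0r.
Qed.

End Gen.

Lemma rank_PU (F : fieldType) k s (N : 'M[F]_(k,s)) j :
  (j <= k)%N -> (\rank (PU j N) <= j)%N.
Proof.
move=> hj; rewrite /PU; apply: leq_trans (mxrankM_maxl _ _) _.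
by rewrite rank_pid_mx.
Qed.

Section Mat.
Variables (R : realType) (p : R).
Hypothesis hp : 0 <= p <= 1.
Variables (n k : nat).

Definition vS (S : {set 'I_n}) (c : {ffun 'I_n -> bool}) : 'rV[R]_#|S| :=
  \row_(t < #|S|) ((c (@enum_val _ (mem S) t))%:R : R).

Lemma core (S : {set 'I_n}) k' (V : 'M[R]_(k', #|S|)) :
  \sum_(c : {ffun 'I_n -> bool} | (vS S c <= V)%MS) mu p c
    <= alpha p ^+ (#|S| - \rank V).
Proof.
have [D [hD hv]] := pivot_set V.
pose ev := @enum_val _ (mem S).
pose T := [set ev t | t in ~: D].
apply: le_trans (mu_inj_bound hp (T := T) _) _.
  move=> c c' Ec Ec' Hag.
  have hdiff : vS S c - vS S c' = 0.
    apply: hv; first by apply: addmx_sub => //; rewrite eqmx_opp.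
    move=> t tD; rewrite !mxE Hag ?subrr //.
    apply/imsetP => -[t' t'D ett'].
    have ett : t = t' := enum_val_inj ett'.
    by rewrite -ett in_setC tD in t'D.
  have hv' : vS S c = vS S c' by apply/eqP; rewrite -subr_eq0 hdiff.
  apply/ffunP => x; case: (boolP (x \in T)) => xT; last exact: Hag.
  case/imsetP: xT => t _ ->.
  have := congr1 (fun v : 'rV[R]_#|S| => v 0 t) hv'; rewrite /= !mxE => /eqP.
  by rewrite eqr_nat; case: (c (ev t)); case: (c' (ev t)).
have cT : #|T| = (#|S| - #|D|)%N.
  rewrite card_imset; last exact: enum_val_inj.
  have h := cardsC D; rewrite card_ord in h.
  by move/(congr1 (fun x => x - #|D|)%N): h; rewrite addKn.
rewrite cT; apply: ler_wiXn2l; [exact: alpha_ge0|exact: alpha_le1|].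
exact: leq_sub2l.
Qed.

Definition upd (B : 'M[bool]_(n,k)) (j : 'I_k) (c : {ffun 'I_n -> bool}) :
  'M[bool]_(n,k) := \matrix_(i,l) if l == j then c i else B i l.

Lemma decomp (G : 'M[bool]_(n,k) -> R) j :
  \sum_A G A = \sum_(B : 'M[bool]_(n,k) | [forall i, ~~ B i j]) \sum_c G (upd B j c).
Proof.
rewrite (partition_big (fun A : 'M[bool]_(n,k) => [ffun i => A i j]) xpredT) //=.
rewrite [RHS]exchange_big /=; apply: eq_bigr => c _.
rewrite (reindex_onto (fun B => upd B j c) (fun A => upd A j [ffun=> false])) /=.
  apply: eq_bigl => B.
  have -> : [ffun i => upd B j c i j] = c.
    by apply/ffunP => i; rewrite !ffunE mxE eqxx.
  rewrite eqxx /=; apply/eqP/forallP => [h i | h].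
    by have := congr1 (fun M : 'M[bool]_(n,k) => M i j) h; rewrite /= !mxE eqxx ffunE => <-.
  apply/matrixP => i l; rewrite !mxE; case: eqP => [->|] //.
  by rewrite ffunE; move: (h i); case: (B i j).
move=> A /eqP hc; apply/matrixP => i l; rewrite !mxE; case: eqP => [->|] //.
by rewrite -hc ffunE.
Qed.

Definition wr (B : 'M[bool]_(n,k)) (j : 'I_k) : R :=
  \prod_i \prod_(l | l != j) q p (B i l).

Lemma wr_ge0 B j : 0 <= wr B j.
Proof.
by apply: prodr_ge0 => i _; apply: prodr_ge0 => l _; exact: q_ge0.
Qed.

Lemma w_upd B j c : bern_weight p (upd B j c) = mu p c * wr B j.
Proof.
rewrite /bern_weight /mu /wr -big_split /=; apply: eq_bigr => i _.
rewrite (bigD1 j) //= mxE eqxx; congr (_ * _).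
by apply: eq_bigr => l /negPf hl; rewrite mxE hl.
Qed.

Lemma sum_w : \sum_(A : 'M[bool]_(n,k)) bern_weight p A = 1.
Proof.
rewrite (reindex (fun f : {ffun 'I_n * 'I_k -> bool} => \matrix_(i,l) f (i,l))) /=.
  transitivity (\sum_(f : {ffun 'I_n * 'I_k -> bool}) mu p f); last exact: sum_mu.
  apply: eq_bigr => f _.
  rewrite /bern_weight /mu pair_big /=; apply: eq_bigr => -[i l] _.
  by rewrite mxE.
exists (fun A : 'M[bool]_(n,k) => [ffun x => A x.1 x.2]) => [f _ | A _].
  by apply/ffunP => -[i l]; rewrite ffunE mxE.
by apply/matrixP => i l; rewrite mxE ffunE.
Qed.

Lemma sum_wr j : \sum_(B : 'M[bool]_(n,k) | [forall i, ~~ B i j]) wr B j = 1.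
Proof.
rewrite -sum_w (decomp _ j); apply: eq_bigr => B _.
under eq_bigr do rewrite w_upd.
by rewrite -mulr_suml sum_mu mul1r.
Qed.

Definition NN (A : 'M[bool]_(n,k)) (S : {set 'I_n}) : 'M[R]_(k, #|S|) :=
  (row_submx R A S)^T.

Lemma Ej_bound (S : {set 'I_n}) (j : 'I_k) :
  \sum_(A : 'M[bool]_(n,k)) bern_weight p A * ((row j (NN A S) <= PU j (NN A S))%MS)%:R
    <= alpha p ^+ (#|S| - j).
Proof.
rewrite (decomp _ j).
have hrow : forall B c, row j (NN (upd B j c) S) = vS S c.
  by move=> B c; apply/rowP => t; rewrite !mxE eqxx.
have hpu : forall B c, PU j (NN (upd B j c) S) = PU j (NN B S).
  move=> B c; apply/matrixP => i t; rewrite !pidmxE; case: ifP => // hi.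
  have : i != j by rewrite neq_ltn hi.
  by move/negPf => hij; rewrite !mxE hij.
apply: le_trans (_ : \sum_(B : 'M[bool]_(n,k) | [forall i, ~~ B i j]) wr B j * alpha p ^+ (#|S| - j) <= _).
  apply: ler_sum => B _.
  under eq_bigr do rewrite w_upd hrow hpu.
  rewrite (eq_bigr (fun c => wr B j * (mu p c * ((vS S c <= PU j (NN B S))%MS)%:R))); last first.
    by move=> c _; rewrite -mulrA mulrCA.
  rewrite -mulr_sumr; apply: ler_wpM2l; first exact: wr_ge0.
  have -> : \sum_c mu p c * ((vS S c <= PU j (NN B S))%MS)%:R
      = \sum_(c | (vS S c <= PU j (NN B S))%MS) mu p c.
    rewrite [RHS]big_mkcond; apply: eq_bigr => c _.
    by case: (vS S c <= _)%MS; rewrite ?mulr1 ?mulr0.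
  apply: le_trans (core _) _.
  apply: ler_wiXn2l; [exact: alpha_ge0 hp|exact: alpha_le1 hp|].
  by apply: leq_sub2l; apply: rank_PU; exact: ltnW.
by rewrite -mulr_suml sum_wr mul1r.
Qed.

Lemma w_ge0 (A : 'M[bool]_(n,k)) : 0 <= bern_weight p A.
Proof.
by apply: prodr_ge0 => i _; apply: prodr_ge0 => l _; exact: (q_ge0 hp).
Qed.

Lemma perS (S : {set 'I_n}) : (k <= #|S|)%N ->
  1 - k%:R * alpha p ^+ (#|S| - k + 1)
    <= \sum_(A : 'M[bool]_(n,k)) bern_weight p A * ((\rank (row_submx R A S) == k)%:R).
Proof.
move=> hkS.
have hind : forall A : 'M[bool]_(n,k), ((\rank (row_submx R A S) != k))%:R
   <= \sum_(j < k) ((row j (NN A S) <= PU j (NN A S))%MS)%:R :> R.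
  move=> A.
  case: (boolP [exists j : 'I_k, (row j (NN A S) <= PU j (NN A S))%MS]).
    case/existsP => j hj; rewrite (bigD1 j) //= hj.
    apply: le_trans (_ : 1 <= 1 + _).
      by case: (_ != k); rewrite ?ler01 ?lexx.
    by rewrite lerDl; apply: sumr_ge0 => i _; exact: ler0n.
  rewrite negb_exists => /forallP h.
  have := rank_seq h; rewrite /NN mxrank_tr => ->; rewrite eqxx /=.
  by apply: sumr_ge0 => i _; exact: ler0n.
have e : \sum_(A : 'M[bool]_(n,k)) bern_weight p A * ((\rank (row_submx R A S) == k)%:R)
   = 1 - \sum_(A : 'M[bool]_(n,k)) bern_weight p A * ((\rank (row_submx R A S) != k)%:R).
  rewrite -[X in _ = X - _]sum_w -sumrB; apply: eq_bigr => A _.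
  by case: eqP => _; rewrite /= ?mulr1 ?mulr0 ?subr0 ?subrr.
rewrite e lerD2l lerN2.
apply: le_trans (_ : \sum_(A : 'M[bool]_(n,k)) bern_weight p A *
   \sum_(j < k) ((row j (NN A S) <= PU j (NN A S))%MS)%:R <= _).
  by apply: ler_sum => A _; apply: ler_wpM2l; [exact: w_ge0 | exact: hind].
under eq_bigr do rewrite mulr_sumr.
rewrite exchange_big /=.
apply: le_trans (_ : \sum_(j < k) alpha p ^+ (#|S| - k + 1) <= _).
  apply: ler_sum => j _; apply: le_trans (Ej_bound S j) _.
  apply: ler_wiXn2l; [exact: alpha_ge0 hp|exact: alpha_le1 hp|].
  have := ltn_ord j; lia.
by rewrite sumr_const card_ord mulr_natl.
Qed.

End Mat.

Unset Implicit Arguments.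
Unset Strict Implicit.

Theorem lemma4 (R : realType) (p : R) (n k m : nat) :
  0 <= p <= 1 -> (k < m)%N -> (m <= n)%N ->
  prob_full_col_rank p n k m >=
    1 - Num.min 1 (k%:R * (Num.max p (1 - p)) ^+ (m - k + 1)).
Proof.
move=> hp hkm hmn.
set x := k%:R * _.
have h0 : 0 <= prob_full_col_rank p n k m.
  apply: sumr_ge0 => A _; apply: sumr_ge0 => S _.
  apply: mulr_ge0; last exact: ler0n.
  by apply: mulr_ge0; [exact: w_ge0 | rewrite invr_ge0 ler0n].
have h1 : 1 - x <= prob_full_col_rank p n k m.
  rewrite /prob_full_col_rank exchange_big /=.
  have hC : ('C(n, m)%:R : R) != 0 by rewrite pnatr_eq0 -lt0n bin_gt0.
  apply: le_trans (_ : \sum_(S : {set 'I_n} | #|S| == m)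
      ('C(n,m)%:R)^-1 * (1 - x) <= _).
    have -> : \sum_(S : {set 'I_n} | #|S| == m) ('C(n,m)%:R)^-1 * (1 - x)
       = \sum_(S in [set S : {set 'I_n} | #|S| == m]) ('C(n,m)%:R : R)^-1 * (1 - x).
      by apply: eq_bigl => S; rewrite inE.
    by rewrite sumr_const card_draws card_ord -[X in _ <= X]mulr_natl mulrA mulfV // mul1r.
  apply: ler_sum => S /eqP hS.
  under eq_bigr do rewrite mulrAC.
  rewrite -mulr_suml [X in X <= _]mulrC; apply: ler_wpM2r; first by rewrite invr_ge0 ler0n.
  have hkS : (k <= #|S|)%N by rewrite hS ltnW.
  apply: le_trans (perS hp hkS).
  by rewrite hS.
case: (lerP 1 x) => hx.
  by rewrite subrr.
exact: h1.
Qed.
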